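(* Let $X$ be a finite poset and let $f\colon X\to\mathbb R$ be a Morse function satisfying the Exclusion condition. Then the associated set $\mathcal M_f=\{(w,x)\in X\times X: w\prec x,\ f(w)\ge f(x)\}$ is a Morse matching on $X$ whose set of critical points equals the set of critical points of $f$. In particular, if $X$ is a finite two-wide poset and $f\colon X\to\mathbb R$ is any Morse function, then $\mathcal M_f$ is a Morse matching with $\mathrm{crit}(f)=\mathrm{crit}(\mathcal M_f)$.
   Context: In a poset, write $a\prec b$ if $a<b$ and there is no $c$ with $a<c<b$; the Hasse diagram $\mathcal H(X)$ is the directed graph with edges $a\to b$ for $a\prec b$. A Morse function on a finite poset $X$ is a map $f\colon X\to\mathbb R$ such that for every $x\in X$, $\#\{y: x\prec y,\ f(x)\ge f(y)\}\le1$ and $\#\{w: w\prec x,\ f(w)\ge f(x)\}\le 1$; $x$ is critical if both sets are empty, regular otherwise; $\mathrm{crit}(f)$ is the set of critical points. $f$ satisfies the Exclusion condition if for every regular $x$ exactly one of these two sets is nonempty. A matching on $X$ is a set $\mathcal M\subseteq X\times X$ such that $(x,y)\in\mathcal M$ implies $x\prec y$ and each element of $X$ belongs to at most one pair of $\mathcal M$. Let $\mathcal H_{\mathcal M}(X)$ be the directed graph obtained from $\mathcal H(X)$ by reversing the edges not in $\mathcal M$; $\mathcal M$ is a Morse matching if $\mathcal H_{\mathcal M}(X)$ has no directed cycles. The critical points $\mathrm{crit}(\mathcal M)$ are the elements not belonging to any pair of $\mathcal M$. A poset is two-wide if for any $x\prec z\prec y$ there is $z'\neq z$ with $x\prec z'\prec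 y$. *)

(* Defs.v *)
(* A finite poset is a [finPOrderType d]; the Morse function
   takes values in an arbitrary real field R (the paper uses R = ℝ; only the
   order of the values matters). *)
From HB Require Import structures.
From mathcomp Require Import all_boot all_order all_algebra.
Set Implicit Arguments. Unset Strict Implicit. Unset Printing Implicit Defensive.
Import Order.TTheory GRing.Theory Num.Theory.

Section Morse.
Context {d : Order.disp_t} {X : finPOrderType d}.

Definition covers (a b : X) : bool :=
  (Order.lt a b) && [forall c : X, ~~ ((Order.lt a c) && (Order.lt c b))].

Definition hasse : rel X := covers.

Context {R : realFieldType}.

Definition up_set (f : X -> R) (x : X) : {set X} :=
  [set y | covers x y && (f y <= f x)%R].
Definition down_set (f : X -> R) (x : X) : {set X} :=
  [set w | covers w x && (f x <= f w)%R].

Definition is_morse (f : X -> R) : Prop :=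
  forall x : X, #|up_set f x| <= 1 /\ #|down_set f x| <= 1.

Definition critical (f : X -> R) (x : X) : bool :=
  (up_set f x == set0) && (down_set f x == set0).

Definition crit (f : X -> R) : {set X} := [set x | critical f x].

Definition exclusion (f : X -> R) : Prop :=
  forall x : X, ~~ critical f x ->
    (up_set f x != set0) (+) (down_set f x != set0).

Definition Mf (f : X -> R) : {set X * X} :=
  [set p : X * X | covers p.1 p.2 && (f p.2 <= f p.1)%R].

End Morse.

Section Matching.
Context {d : Order.disp_t} {X : finPOrderType d}.

Definition is_matching (M : {set X * X}) : Prop :=
  (forall p, p \in M -> covers p.1 p.2) /\
  (forall x : X, #|[set p in M | (p.1 == x) || (p.2 == x)]| <= 1).

Definition hasseM (M : {set X * X}) : rel X :=
  fun a b => (covers a b && ((a, b) \in M)) || (covers b a && ((b, a) \notin M)).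

(* no directed cycle: no x reaches itself by a path of positive length *)
Definition acyclic (e : rel X) : Prop :=
  forall x y : X, e x y -> ~~ connect e y x.

Definition morse_matching (M : {set X * X}) : Prop :=
  is_matching M /\ acyclic (hasseM M).

Definition crit_matching (M : {set X * X}) : {set X} :=
  [set x | [forall p in M, (p.1 != x) && (p.2 != x)]].

Definition two_wide : Prop :=
  forall x z y : X, covers x z -> covers z y ->
    exists z' : X, z' != z /\ covers x z' /\ covers z' y.

End Matching.

(* Main.v *)
Require Import Defs.
From HB Require Import structures.
From mathcomp Require Import all_boot all_order all_algebra.
Import Order.TTheory GRing.Theory Num.Theory.
Set Implicit Arguments. Unset Strict Implicit.

Section Aux.
Context {d : Order.disp_t} {X : finPOrderType d} {R : realFieldType}.

Lemma covers_lt (a b : X) : covers a b -> (a < b)%O.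
Proof. by case/andP. Qed.

Lemma le1_eq (A : {set X}) a b : #|A| <= 1 -> a \in A -> b \in A -> a = b.
Proof. by move=> /card_le1_eqP H aA bA; apply: H. Qed.

Definition ltf (f : X -> R) (a b : X) : bool :=
  (f b < f a)%R || ((f b == f a) && (a < b)%O).

Lemma ltf_trans (f : X -> R) a b c : ltf f a b -> ltf f b c -> ltf f a c.
Proof.
rewrite /ltf => /orP[h1|/andP[/eqP e1 l1]] /orP[h2|/andP[/eqP e2 l2]].
- by rewrite (lt_trans h2 h1).
- by rewrite e2 h1.
- by rewrite -e1 h2.
- by rewrite e2 e1 eqxx (lt_trans l1 l2) orbT.
Qed.

Lemma ltf_irr (f : X -> R) a : ~~ ltf f a a.
Proof. by rewrite /ltf ltxx lt_irreflexive andbF. Qed.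

Lemma edge_ltf (f : X -> R) a b : hasseM (Mf f) a b -> ltf f a b.
Proof.
rewrite /hasseM /Mf !inE /=.
case/orP=> [/andP[cab /andP[_ le]] | /andP[cba nM]].
  rewrite /ltf; move: le; rewrite le_eqVlt => /orP[/eqP e|h]; last by rewrite h.
  by rewrite e eqxx (covers_lt cab) orbT.
by move: nM; rewrite cba /= -ltNge => h; rewrite /ltf h.
Qed.

Lemma path_ltf (f : X -> R) x p : path (hasseM (Mf f)) x p -> p != [::] -> ltf f x (last x p).
Proof.
elim: p x => [|y p IH] x //= /andP[e pp] _.
case: p IH pp => [|z p] IH pp /=; first exact: edge_ltf.
apply: (@ltf_trans f x y); first exact: edge_ltf.
exact: (IH y pp).
Qed.

Lemma acyc (f : X -> R) : acyclic (hasseM (Mf f)).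
Proof.
move=> x y e; apply/negP => /connectP[p pp ex].
have lxy := edge_ltf e.
case: p pp ex => [|z p] pp ex.
  by move: lxy; rewrite /= in ex; rewrite ex (negbTE (ltf_irr _ _)).
have := path_ltf pp isT; rewrite -ex => lyx.
by move: (ltf_trans lxy lyx); rewrite (negbTE (ltf_irr _ _)).
Qed.

Lemma part1 (f : X -> R) : is_morse f -> exclusion f ->
  morse_matching (Mf f) /\ crit_matching (Mf f) = crit f.
Proof.
move=> Hm Hex; split; [split; [split|] |].
- by move=> p; rewrite inE => /andP[].
- move=> x; apply/card_le1_eqP => p q; rewrite !inE.
  have upm : forall r : X * X, covers r.1 r.2 && (f r.2 <= f r.1)%R -> r.1 == x -> r.2 \in up_set f x.
    by move=> [a b] /= /andP[c l] /eqP <-; rewrite inE c l.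
  have dnm : forall r : X * X, covers r.1 r.2 && (f r.2 <= f r.1)%R -> r.2 == x -> r.1 \in down_set f x.
    by move=> [a b] /= /andP[c l] /eqP <-; rewrite inE c l.
  have nboth : forall a b, a \in up_set f x -> b \in down_set f x -> False.
    move=> a b au bd; have hc : ~~ critical f x.
      by rewrite /critical negb_and; apply/orP; left; apply/set0Pn; exists a.
    move: (Hex x hc).
    have -> : up_set f x != set0 by apply/set0Pn; exists a.
    by have -> : down_set f x != set0 by apply/set0Pn; exists b.
  case: (Hm x) => Hu Hd.
  case/andP=> pM /orP[p1|p2]; case/andP=> qM /orP[q1|q2].
  + have := le1_eq Hu (upm _ pM p1) (upm _ qM q1).
    by move: p1 q1; clear pM qM; case: p => ? ?; case: q => ? ? /= /eqP -> /eqP -> ->.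
  + by case: (nboth _ _ (upm _ pM p1) (dnm _ qM q2)).
  + by case: (nboth _ _ (upm _ qM q1) (dnm _ pM p2)).
  + have := le1_eq Hd (dnm _ pM p2) (dnm _ qM q2).
    by move: p2 q2; clear pM qM; case: p => ? ?; case: q => ? ? /= /eqP -> /eqP -> ->.
- exact: acyc.
- apply/setP => x; rewrite !inE /critical.
  apply/forallP/andP.
  + move=> H; split; apply/eqP/setP => y; rewrite !inE; apply/negP => /andP[c l].
      by move: (H (x, y)); rewrite !inE /= c l eqxx.
    by move: (H (y, x)); rewrite !inE /= c l eqxx andbF.
  + case=> /eqP U /eqP D [a b]; apply/implyP; rewrite inE /= => /andP[c l].
    apply/andP; split; apply/eqP => e; subst.
      by move/setP: U => /(_ b); rewrite !inE c l.
    by move/setP: D => /(_ a); rewrite !inE c l.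
Qed.

End Aux.

Theorem mainTheorem6 (d : Order.disp_t) (X : finPOrderType d) (R : realFieldType) :
  (forall f : X -> R, is_morse f -> exclusion f ->
     morse_matching (Mf f) /\ crit_matching (Mf f) = crit f) /\
  (two_wide (X := X) ->
   forall f : X -> R, is_morse f ->
     morse_matching (Mf f) /\ crit f = crit_matching (Mf f)).
Proof.
split; first exact: part1.
move=> Htw f Hm.
suff Hex : exclusion f by case: (part1 Hm Hex) => ? ->.
move=> x; rewrite /critical negb_and => hc.
case E1: (up_set f x == set0); case E2: (down_set f x == set0) => //=; move: hc; rewrite E1 E2 //= => _.
case/set0Pn: (negbT E1) => y; rewrite inE => /andP[cxy lxy].
case/set0Pn: (negbT E2) => w; rewrite inE => /andP[cwx lwx].
have [x' [nx [cwx' cx'y]]] := Htw _ _ _ cwx cxy.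
have h1 : ~~ (f y <= f x')%R.
  apply/negP => l; case: (Hm y) => _ Hd.
  have := le1_eq Hd (a := x) (b := x'); rewrite !inE cxy lxy cx'y l => /(_ isT isT) e.
  by rewrite e eqxx in nx.
have h2 : ~~ (f x' <= f w)%R.
  apply/negP => l; case: (Hm w) => Hu _.
  have := le1_eq Hu (a := x) (b := x'); rewrite !inE cwx lwx cwx' l => /(_ isT isT) e.
  by rewrite e eqxx in nx.
rewrite -ltNge in h1; rewrite -ltNge in h2.
have := lt_le_trans (lt_trans h2 h1) (le_trans lxy lwx).
by rewrite ltxx.
Qed.
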